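(* $SL_3(\mathfrak{o})$ is the union of the sets $$\Gamma_\infty(3)\,u\,d\,\varphi_1(y)\quad (y\in Y(\mathfrak{o}),\ d\in D(3),\ u\in U(3)),$$ $$\Gamma_\infty(3)\,u\,d\,\varphi_2(y_2)\varphi_1(y_1)\quad (y_1,y_2\in Y(\mathfrak{o}),\ y_2\neq I_2,\ d\in D(3),\ u\in U(3)),$$ $$\Gamma_\infty(3)\,u\,d\,\varphi_1(y_3)\varphi_2(y_2)\varphi_1(y_1)\quad (y_1,y_2,y_3\in Y(\mathfrak{o}),\ y_2,y_3\neq I_2,\ d\in D(3),\ u\in U(3)),$$ and this union is disjoint: the three families together form a decomposition of $SL_3(\mathfrak{o})$ into pairwise disjoint sets.
   Context: Let $\omega=e^{2\pi i/3}$, $\mathfrak{o}=\mathbb{Z}[\omega]$, $\mathfrak{o}^\times$ its unit group. Fix representatives of nonzero elements modulo units (''$c\in(\mathfrak{o}-\{0\})/\mathfrak{o}^\times$'') and, for each nonzero $c$, representatives of $\mathfrak{o}/c\mathfrak{o}$ (''$a\in\mathfrak{o}/c\mathfrak{o}$''). $Y(\mathfrak{o})=\{\begin{pmatrix}a&b\\c&d\end{pmatrix}\in SL_2(\mathfrak{o}) : c\in(\mathfrak{o}-\{0\})/\mathfrak{o}^\times,\ a\in\mathfrak{o}/c\mathfrak{o}\}\cup\{I_2\}$. $\Gamma(3)=\{A\in SL_3(\mathfrak{o}):A\equiv I_3\pmod{3\mathfrak{o}}\}$ (entrywise), $\Gamma_\infty(3)$ its subgroup of upper triangular unipotent matrices.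 $D(3)$: diagonal $\mathrm{diag}(i,j,k)$ with $i,j,k\in\mathfrak{o}$, $ijk=1$. $U(3)$: matrices $\begin{pmatrix}1&\alpha&\beta\\&1&\gamma\\&&1\end{pmatrix}$ with $\alpha,\beta,\gamma\in\{0,1,2\}+\{0,1,2\}\omega$. For $y=\begin{pmatrix}a&b\\c&d\end{pmatrix}\in SL_2(\mathfrak{o})$, $\varphi_1(y)=\begin{pmatrix}a&b&0\\c&d&0\\0&0&1\end{pmatrix}$, $\varphi_2(y)=\begin{pmatrix}1&0&0\\0&a&b\\0&c&d\end{pmatrix}$. *)

(* Defs.v *)
(* The Eisenstein integers o = Z[omega] are realised inside
   the algebraic complex numbers algC, omega = (-1 + i sqrt 3)/2. *)
From HB Require Import structures.
From mathcomp Require Import all_boot all_order all_algebra all_field.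
Set Implicit Arguments. Unset Strict Implicit. Unset Printing Implicit Defensive.
Import Order.TTheory GRing.Theory Num.Theory.
Local Open Scope ring_scope.

Definition omega : algC := (-1 + 'i * sqrtC 3%:R) / 2%:R.

Definition inO (x : algC) : Prop := exists a b : int, x = a%:~R + b%:~R * omega.

Definition unitO (x : algC) : Prop := inO x /\ exists y, inO y /\ x * y = 1.

Definition dvdO (c x : algC) : Prop := exists q, inO q /\ x = c * q.

Definition reps_nonzero_mod_units (Cs : algC -> Prop) : Prop :=
  (forall c, Cs c -> inO c /\ c <> 0) /\
  (forall x, inO x -> x <> 0 -> exists! c, Cs c /\ exists u, unitO u /\ x = u * c).

Definition reps_mod (c : algC) (Ac : algC -> Prop) : Prop :=
  (forall a, Ac a -> inO a) /\
  (forall x, inO x -> exists! a, Ac a /\ dvdO c (x - a)).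

Definition i0 : 'I_3 := @Ordinal 3 0 isT.
Definition i1 : 'I_3 := @Ordinal 3 1 isT.
Definition i2 : 'I_3 := @Ordinal 3 2 isT.
Definition j0 : 'I_2 := @Ordinal 2 0 isT.
Definition j1 : 'I_2 := @Ordinal 2 1 isT.

Definition SL2o (y : 'M[algC]_2) : Prop := (forall i j, inO (y i j)) /\ \det y = 1.
Definition SL3o (g : 'M[algC]_3) : Prop := (forall i j, inO (g i j)) /\ \det g = 1.

Definition Yo (Cs : algC -> Prop) (As : algC -> algC -> Prop) (y : 'M[algC]_2) : Prop :=
  (SL2o y /\ Cs (y j1 j0) /\ As (y j1 j0) (y j0 j0)) \/ y = 1%:M.

Definition Gamma_inf3 (g : 'M[algC]_3) : Prop :=
  (forall i j : 'I_3, (j < i)%N -> g i j = 0) /\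
  (forall i : 'I_3, g i i = 1) /\
  (forall i j : 'I_3, (i < j)%N -> dvdO 3%:R (g i j)).

Definition D3 (d : 'M[algC]_3) : Prop :=
  (forall i j : 'I_3, i != j -> d i j = 0) /\
  (forall i, inO (d i i)) /\ d i0 i0 * d i1 i1 * d i2 i2 = 1.

Definition R3 (x : algC) : Prop :=
  exists a b : nat, (a < 3)%N /\ (b < 3)%N /\ x = a%:R + b%:R * omega.

Definition U3 (u : 'M[algC]_3) : Prop :=
  (forall i j : 'I_3, (j < i)%N -> u i j = 0) /\
  (forall i : 'I_3, u i i = 1) /\
  (forall i j : 'I_3, (i < j)%N -> R3 (u i j)).

Definition phi1 (y : 'M[algC]_2) : 'M[algC]_3 :=
  \matrix_(i < 3, j < 3)
    if ((i < 2) && (j < 2))%N then y (inord i) (inord j) else (i == j)%:R.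
Definition phi2 (y : 'M[algC]_2) : 'M[algC]_3 :=
  \matrix_(i < 3, j < 3)
    if ((0 < i) && (0 < j))%N then y (inord i.-1) (inord j.-1) else (i == j)%:R.

Inductive piece :=
  | P1 of 'M[algC]_3 & 'M[algC]_3 & 'M[algC]_2
  | P2 of 'M[algC]_3 & 'M[algC]_3 & 'M[algC]_2 & 'M[algC]_2
  | P3 of 'M[algC]_3 & 'M[algC]_3 & 'M[algC]_2 & 'M[algC]_2 & 'M[algC]_2.

Definition valid_piece Cs As (p : piece) : Prop :=
  match p with
  | P1 u d y => U3 u /\ D3 d /\ Yo Cs As y
  | P2 u d y2 y1 => U3 u /\ D3 d /\ Yo Cs As y2 /\ Yo Cs As y1 /\ y2 <> 1%:M
  | P3 u d y3 y2 y1 => U3 u /\ D3 d /\ Yo Cs As y3 /\ Yo Cs As y2 /\ Yo Cs As y1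
                       /\ y2 <> 1%:M /\ y3 <> 1%:M
  end.

Definition piece_mx (p : piece) : 'M[algC]_3 :=
  match p with
  | P1 u d y => u *m d *m phi1 y
  | P2 u d y2 y1 => u *m d *m (phi2 y2 *m phi1 y1)
  | P3 u d y3 y2 y1 => u *m d *m (phi1 y3 *m phi2 y2 *m phi1 y1)
  end.

Definition in_piece (p : piece) (g : 'M[algC]_3) : Prop :=
  exists gam, Gamma_inf3 gam /\ g = gam *m piece_mx p.

(* Main.v *)
Require Import Defs.
From HB Require Import structures.
From mathcomp Require Import all_boot all_order all_algebra all_field.
From mathcomp Require Import ring lra zify.
Set Implicit Arguments. Unset Strict Implicit. Unset Printing Implicit Defensive.
Import Order.TTheory GRing.Theory Num.Theory.
Local Open Scope ring_scope.

Definition M3 (a b c d e f g h k : algC) : 'M[algC]_3 :=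
  \matrix_(i < 3, j < 3) nth 0 (nth [::] [:: [:: a; b; c]; [:: d; e; f]; [:: g; h; k]] i) j.
Definition M2 (a b c d : algC) : 'M[algC]_2 :=
  \matrix_(i < 2, j < 2) nth 0 (nth [::] [:: [:: a; b]; [:: c; d]] i) j.

Lemma det_M3 a b c d e f g h k :
  \det (M3 a b c d e f g h k) = a*e*k + b*f*g + c*d*h - c*e*g - a*f*h - b*d*k.
Proof.
rewrite (expand_det_row _ ord0) !big_ord_recl big_ord0 /cofactor.
rewrite !(expand_det_row _ ord0) !big_ord_recl !big_ord0 /cofactor.
rewrite !det_mx11 !mxE /= /bump /=; ring.
Qed.

Lemma det_M2 a b c d : \det (M2 a b c d) = a*d - b*c.
Proof.
rewrite (expand_det_row _ ord0) !big_ord_recl big_ord0 /cofactor.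
rewrite !det_mx11 !mxE /= /bump /=; ring.
Qed.

Lemma mul_M3 a b c d e f g h k a' b' c' d' e' f' g' h' k' :
  M3 a b c d e f g h k *m M3 a' b' c' d' e' f' g' h' k' =
  M3 (a*a' + b*d' + c*g') (a*b' + b*e' + c*h') (a*c' + b*f' + c*k')
     (d*a' + e*d' + f*g') (d*b' + e*e' + f*h') (d*c' + e*f' + f*k')
     (g*a' + h*d' + k*g') (g*b' + h*e' + k*h') (g*c' + h*f' + k*k').
Proof.
apply/matrixP => i j; rewrite !mxE !big_ord_recl big_ord0 !mxE /=.
case: i => [[|[|[|i]]] Hi] //; case: j => [[|[|[|j]]] Hj] //=; ring.
Qed.

Lemma mul_M2 a b c d a' b' c' d' :
  M2 a b c d *m M2 a' b' c' d' =
  M2 (a*a' + b*c') (a*b' + b*d') (c*a' + d*c') (c*b' + d*d').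
Proof.
apply/matrixP => i j; rewrite !mxE !big_ord_recl big_ord0 !mxE /=.
case: i => [[|[|i]] Hi] //; case: j => [[|[|j]] Hj] //=; ring.
Qed.

Lemma eta3 (M : 'M[algC]_3) : M = M3 (M i0 i0) (M i0 i1) (M i0 i2) (M i1 i0) (M i1 i1) (M i1 i2)
   (M i2 i0) (M i2 i1) (M i2 i2).
Proof.
apply/matrixP => i j; rewrite !mxE.
case: i => [[|[|[|i]]] Hi] //; case: j => [[|[|[|j]]] Hj] //=; congr (M _ _); exact: val_inj.
Qed.

Lemma eta2 (M : 'M[algC]_2) : M = M2 (M j0 j0) (M j0 j1) (M j1 j0) (M j1 j1).
Proof.
apply/matrixP => i j; rewrite !mxE.
case: i => [[|[|i]] Hi] //; case: j => [[|[|j]] Hj] //=; congr (M _ _); exact: val_inj.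
Qed.

Lemma M3_inj a b c d e f g h k a' b' c' d' e' f' g' h' k' :
  M3 a b c d e f g h k = M3 a' b' c' d' e' f' g' h' k' ->
  [/\ a = a', b = b', c = c', d = d' & [/\ e = e', f = f', g = g', h = h' & k = k']].
Proof.
move=> E.
have F : forall i j, M3 a b c d e f g h k i j = M3 a' b' c' d' e' f' g' h' k' i j by rewrite E.
move: (F i0 i0) (F i0 i1) (F i0 i2) (F i1 i0) (F i1 i1) (F i1 i2) (F i2 i0) (F i2 i1) (F i2 i2).
by rewrite !mxE /=.
Qed.

Lemma M2_inj a b c d a' b' c' d' :
  M2 a b c d = M2 a' b' c' d' -> [/\ a = a', b = b', c = c' & d = d'].
Proof.
move=> E.
have F : forall i j, M2 a b c d i j = M2 a' b' c' d' i j by rewrite E.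
move: (F j0 j0) (F j0 j1) (F j1 j0) (F j1 j1).
by rewrite !mxE /=.
Qed.

Lemma M3_1 : (1%:M : 'M[algC]_3) = M3 1 0 0 0 1 0 0 0 1.
Proof. by rewrite [LHS]eta3 !mxE. Qed.
Lemma M2_1 : (1%:M : 'M[algC]_2) = M2 1 0 0 1.
Proof. by rewrite [LHS]eta2 !mxE. Qed.

Lemma phi1_M2 a b c d : phi1 (M2 a b c d) = M3 a b 0 c d 0 0 0 1.
Proof.
apply/matrixP => i j; rewrite !mxE.
case: i => [[|[|[|i]]] Hi] //; case: j => [[|[|[|j]]] Hj] //=; rewrite ?mxE ?inordK //.
Qed.

Lemma phi2_M2 a b c d : phi2 (M2 a b c d) = M3 1 0 0 0 a b 0 c d.
Proof.
apply/matrixP => i j; rewrite !mxE.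
case: i => [[|[|[|i]]] Hi] //; case: j => [[|[|[|j]]] Hj] //=; rewrite ?mxE ?inordK //.
Qed.

Lemma omega2 : omega ^+ 2 = - 1 - omega.
Proof.
rewrite /omega; set s := 'i * sqrtC 3%:R.
have s2 : s ^+ 2 = - 3%:R by rewrite /s exprMn sqrCi sqrtCK mulN1r.
have h2 : (2%:R : algC) != 0 by rewrite pnatr_eq0.
apply/eqP; rewrite -subr_eq0; apply/eqP.
have -> : ((-1 + s) / 2%:R) ^+ 2 - (-1 - (-1 + s) / 2%:R) = (s ^+ 2 + 3%:R) / 4%:R.
  by field.
by rewrite s2 addNr mul0r.
Qed.

Definition toC (a b : int) : algC := a%:~R + b%:~R * omega.

Lemma toC_mul a b c d : toC a b * toC c d = toC (a*c - b*d) (a*d + b*c - b*d).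
Proof.
rewrite /toC !(intrD, intrB, intrM).
have E : omega * omega = -1 - omega by rewrite -expr2 omega2.
transitivity (a%:~R * c%:~R + (a%:~R * d%:~R + b%:~R * c%:~R) * omega
   + b%:~R * d%:~R * (omega * omega) : algC); first by ring.
rewrite E; ring.
Qed.

Lemma toC_add a b c d : toC a b + toC c d = toC (a + c) (b + d).
Proof. rewrite /toC !intrD; ring. Qed.
Lemma toC_opp a b : - toC a b = toC (- a) (- b).
Proof. rewrite /toC !intrN; ring. Qed.

Definition Nm (a b : int) : int := a*a - a*b + b*b.

Lemma toC0 a b : toC a b = 0 -> a = 0 /\ b = 0.
Proof.
move=> H.
have : toC a b * toC (a - b) (- b) = (Nm a b)%:~R.
  rewrite toC_mul /toC /Nm.
  have -> : a * - b + b * (a - b) - b * - b = 0 by ring.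
  rewrite mul0r addr0; congr (_ %:~R); ring.
rewrite H mul0r => /esym/eqP; rewrite intr_eq0 /Nm => /eqP E.
split; nia.
Qed.

Lemma toC_inj a b c d : toC a b = toC c d -> a = c /\ b = d.
Proof.
move=> E.
have : toC (a - c) (b - d) = 0.
  by rewrite -[a - c]/(a + - c) -[b - d]/(b + - d) -toC_add -toC_opp E subrr.
move/toC0 => [h1 h2]; split; apply/eqP; rewrite -subr_eq0; apply/eqP => //.
Qed.

Lemma inO_toC a b : inO (toC a b).
Proof. by exists a, b. Qed.
Lemma inOE x : inO x -> exists a b, x = toC a b.
Proof. by []. Qed.
Lemma inOM x y : inO x -> inO y -> inO (x * y).
Proof. move=> [a [b ->]] [c [d ->]]; rewrite toC_mul; exact: inO_toC. Qed.
Lemma inOD x y : inO x -> inO y -> inO (x + y).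
Proof. move=> [a [b ->]] [c [d ->]]; rewrite toC_add; exact: inO_toC. Qed.
Lemma inON x : inO x -> inO (- x).
Proof. move=> [a [b ->]]; rewrite toC_opp; exact: inO_toC. Qed.
Lemma inOB x y : inO x -> inO y -> inO (x - y).
Proof. by move=> hx hy; apply: inOD => //; apply: inON. Qed.
Lemma inO_int z : inO (z%:~R).
Proof. exists z, 0; by rewrite mul0r addr0. Qed.
Lemma inO0 : inO 0. Proof. exact: (inO_int 0). Qed.
Lemma inO1 : inO 1. Proof. exact: (inO_int 1). Qed.
Lemma inO_nat n : inO (n%:R). Proof. exact: (inO_int n). Qed.
Lemma inO_omega : inO omega. Proof. exists 0, 1; by rewrite add0r mul1r. Qed.

Lemma round (s n : int) : 0 < n -> exists k s', s = k * n + s' /\ - n <= 2 * s' /\ 2 * s' <= n.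
Proof.
move=> n0.
have n2 : (2 * n) != 0 by lia.
have := divz_eq (2 * s + n) (2 * n).
have := modz_ge0 (2 * s + n) n2.
have := @ltz_pmod (2 * s + n) (2 * n) ltac:(lia).
set k := ((2 * s + n) %/ (2 * n))%Z; set m := ((2 * s + n) %% (2 * n))%Z => h1 h2 h3.
exists k, (s - k * n); split; first by ring.
split; nia.
Qed.

Lemma euclid a b c d : (c, d) <> (0, 0) ->
  exists k1 k2 r1 r2, toC a b = toC k1 k2 * toC c d + toC r1 r2 /\ Nm r1 r2 < Nm c d.
Proof.
move=> nz.
have n0 : 0 < Nm c d.
  rewrite /Nm; have : ~ (c = 0 /\ d = 0) by move=> [hc hd]; apply: nz; rewrite hc hd.
  move=> H; nia.
set n := Nm c d.
have [k1 [s' [es [hs1 hs2]]]] := round (a*c - a*d + b*d) n0.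
have [k2 [t' [et [ht1 ht2]]]] := round (b*c - a*d) n0.
exists k1, k2, (a - (k1 * c - k2 * d)), (b - (k1 * d + k2 * c - k2 * d)); split.
  by rewrite toC_mul toC_add; congr toC; ring.
set r1 := (a - _); set r2 := (b - _).
have E : n * (n * Nm r1 r2) = n * (s' * s' - s' * t' + t' * t').
  have -> : s' = a*c - a*d + b*d - k1 * n by rewrite es; ring.
  have -> : t' = b*c - a*d - k2 * n by rewrite et; ring.
  rewrite /n /Nm /r1 /r2; ring.
have {}E := mulfI (lt0r_neq0 n0) E.
have B : 4 * (s' * s' - s' * t' + t' * t') <= 3 * (n * n) by nia.
nia.
Qed.

Definition bezP (x y : algC) := exists l c d p q, [/\ inO l, inO c, inO d, inO p & inO q] /\
   [/\ x = l * c, y = l * d & p * d - q * c = 1].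

Lemma bez_nat (n : nat) : forall a b c d, Nm c d < n%:Z -> bezP (toC a b) (toC c d).
Proof.
elim: n => [|n IH] a b c d hn.
  exfalso; move: hn; rewrite /Nm; nia.
case: (boolP ((c == 0) && (d == 0))) => [/andP[/eqP c0 /eqP d0]|nz].
  exists (toC a b), 1, 0, 0, (-1); split; first by split; [apply: inO_toC|exact: inO1|exact: inO0|exact: inO0|apply: inON; exact: inO1].
  by rewrite c0 d0 /toC !mul0r !addr0 mulr1 mulr0; split=> //; ring.
have nz' : (c, d) <> (0, 0) by case=> c0 d0; move: nz; rewrite c0 d0 eqxx.
have [k1 [k2 [r1 [r2 [E hr]]]]] := euclid a b nz'.
have [l [c' [d' [p' [q' [[hl hc hd hp hq] [e1 e2 e3]]]]]]] := IH c d r1 r2 ltac:(lia).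
exists l, (toC k1 k2 * c' + d'), c', (- q' - p' * toC k1 k2), (- p'); split.
  split=> //; first by apply: inOD => //; apply: inOM => //; apply: inO_toC.
  by apply: inOB; [apply: inON | apply: inOM => //; apply: inO_toC].
  by apply: inON.
split=> //.
  by rewrite E e1 e2; ring.
by rewrite -e3; ring.
Qed.

Lemma bez x y : inO x -> inO y -> bezP x y.
Proof.
move=> [a [b ->]] [c [d ->]].
apply: (@bez_nat (absz (Nm c d)).+1).
rewrite /Nm; nia.
Qed.

Lemma R3_uniq x x' : R3 x -> R3 x' -> dvdO 3%:R (x - x') -> x = x'.
Proof.
move=> [a [b [ha [hb ->]]]] [a' [b' [ha' [hb' ->]]]] [q [[e [f ->]] E]].
have : toC (a%:Z - a'%:Z) (b%:Z - b'%:Z) = toC (3 * e) (3 * f).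
  have -> : toC (a%:Z - a'%:Z) (b%:Z - b'%:Z) = a%:R + b%:R * omega - (a'%:R + b'%:R * omega).
    by rewrite /toC !intrB; ring.
  by rewrite E /toC !intrM; ring.
case/toC_inj => h1 h2.
have -> : a = a' by lia.
have -> : b = b' by lia.
by [].
Qed.

Lemma red3 x : inO x -> exists r k, [/\ R3 r, inO k & x = r + 3%:R * k].
Proof.
move=> [a [b ->]].
have h3 : (3 : int) != 0 by [].
have ea := divz_eq a 3; have eb := divz_eq b 3.
have la := modz_ge0 a h3; have lb := modz_ge0 b h3.
have ua := @ltz_pmod a 3 isT; have ub := @ltz_pmod b 3 isT.
set qa := (a %/ 3)%Z in ea *; set qb := (b %/ 3)%Z in eb *.
set ra := (a %% 3)%Z in ea la ua *; set rb := (b %% 3)%Z in eb lb ub *.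
clearbody qa qb ra rb.
exists (toC ra rb), (toC qa qb); split.
- exists (absz ra), (absz rb); split; first by rewrite -ltz_nat gez0_abs.
  split; first by rewrite -ltz_nat gez0_abs.
  by rewrite /toC -{1}(gez0_abs la) -{1}(gez0_abs lb).
- exact: inO_toC.
- by rewrite {1}ea {1}eb /toC !intrD !intrM; ring.
Qed.

Lemma lc1 (x y K P Q : algC) : P = Q -> x - y = K * (P - Q) -> x = y.
Proof. by move=> ->; rewrite subrr mulr0 => /eqP; rewrite subr_eq0 => /eqP. Qed.
Lemma lc2 (x y K1 P1 Q1 K2 P2 Q2 : algC) : P1 = Q1 -> P2 = Q2 ->
  x - y = K1 * (P1 - Q1) + K2 * (P2 - Q2) -> x = y.
Proof. by move=> -> ->; rewrite !subrr !mulr0 addr0 => /eqP; rewrite subr_eq0 => /eqP. Qed.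

Lemma SL2o_M2 a b c d : inO a -> inO b -> inO c -> inO d -> a * d - b * c = 1 ->
  SL2o (M2 a b c d).
Proof.
move=> ha hb hc hd hdet; split; last by rewrite det_M2.
by move=> i j; rewrite mxE; case: i => [[|[|i]] Hi] //; case: j => [[|[|j]] Hj] //=; apply: inO0.
Qed.

Lemma Yo_M2 Cs As a b c d : Yo Cs As (M2 a b c d) ->
  [/\ [/\ inO a, inO b, inO c & inO d], a * d - b * c = 1 &
     ((Cs c /\ As c a) \/ [/\ a = 1, b = 0, c = 0 & d = 1])].
Proof.
case=> [[[hin hdet] [hc ha]]|E].
  move: (hin j0 j0) (hin j0 j1) (hin j1 j0) (hin j1 j1) hc ha hdet.
  rewrite det_M2 !mxE /= => h1 h2 h3 h4 hc ha hdet; split=> //; by left.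
move: E; rewrite M2_1 => /M2_inj [-> -> -> ->]; split; rewrite ?mulr1 ?mulr0 ?subr0 //.
  split; [exact: inO1|exact: inO0|exact: inO0|exact: inO1].
by right.
Qed.

Lemma mkY Cs As (hCs : reps_nonzero_mod_units Cs) (hAs : forall c, Cs c -> reps_mod c (As c))
  c0 d0 p q : inO c0 -> inO d0 -> inO p -> inO q -> p * d0 - q * c0 = 1 ->
  exists a b c d e e', [/\ Yo Cs As (M2 a b c d), [/\ inO a, inO b, inO c & inO d],
     a * d - b * c = 1, [/\ inO e, inO e' & e * e' = 1] & (c0 = e * c /\ d0 = e * d)].
Proof.
move=> hc0 hd0 hp hq hb.
case: (eqVneq c0 0) => [c00|nz].
  exists 1, 0, 0, 1, d0, p; split.
  - by right; rewrite M2_1.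
  - split; [exact: inO1|exact: inO0|exact: inO0|exact: inO1].
  - by rewrite mulr1 mulr0 subr0.
  - by split=> //; rewrite mulrC -hb c00 mulr0 subr0.
  - by rewrite c00 mulr0 mulr1.
have nz' : c0 <> 0 by apply/eqP.
have [cc [[Hcc [u [[hu [u' [hu' uu']]] ec]]] _]] := hCs.2 c0 hc0 nz'.
have [hAs1 hAs2] := hAs cc Hcc.
have hcc : inO cc := (hCs.1 cc Hcc).1.
have [a [[Ha [k [hk ek]]] _]] := hAs2 (p * u) (inOM hp hu).
have ha := hAs1 a Ha.
have ea : a = p * u - cc * k by rewrite -ek; ring.
rewrite ec in hb.
have hd : inO (u' * d0) := inOM hu' hd0.
have hbb : inO (q * u - k * (u' * d0)) := inOB (inOM hq hu) (inOM hk hd).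
have hdet : a * (u' * d0) - (q * u - k * (u' * d0)) * cc = 1.
  by apply: (lc2 (K1 := 1) (K2 := p * d0) hb uu'); rewrite ea; ring.
exists a, (q * u - k * (u' * d0)), cc, (u' * d0), u, u'; split => //.
- by left; split; [apply: SL2o_M2|rewrite !mxE /=].
- by rewrite mulrA uu' mul1r.
Qed.

Lemma Cs_nz Cs (hCs : reps_nonzero_mod_units Cs) c : Cs c -> c <> 0.
Proof. by move=> /(hCs.1) []. Qed.

Lemma Yuniq Cs As (hCs : reps_nonzero_mod_units Cs) (hAs : forall c, Cs c -> reps_mod c (As c))
  a b c d a' b' c' d' : Yo Cs As (M2 a b c d) -> Yo Cs As (M2 a' b' c' d') ->
  c' * d = d' * c -> M2 a b c d = M2 a' b' c' d'.
Proof.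
move=> /Yo_M2 [[ha hb hc hd] P1 Y] /Yo_M2 [[ha' hb' hc' hd'] P2 Y'] H.
have H' : c * d' = d * c' by rewrite mulrC -H mulrC.
have E1 : c' = (a * d' - b * c') * c.
  by apply: (lc2 (K1 := a) (K2 := - c') H P1); ring.
have E2 : d' = (a * d' - b * c') * d.
  by apply: (lc2 (K1 := b) (K2 := - d') H P1); ring.
have F1 : c = (a' * d - b' * c) * c'.
  by apply: (lc2 (K1 := a') (K2 := - c) H' P2); ring.
case: Y => [[Cc Ac]|[ea eb ec ed]]; case: Y' => [[Cc' Ac']|[ea' eb' ec' ed']].
- have cn := Cs_nz hCs Cc; have cn' := Cs_nz hCs Cc'.
  set e := a * d' - b * c' in E1 E2.
  have he : inO e by apply: inOB; apply: inOM.
  set e' := a' * d - b' * c in F1.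
  have he' : inO e' by apply: inOB; apply: inOM.
  have ee : e' * e = 1.
    apply: (@mulIf _ c); first by apply/eqP.
    by rewrite mul1r -mulrA -E1 -F1.
  have [z [_ U]] := hCs.2 c' hc' cn'.
  have cc' : c = c'.
    rewrite -(U c') ?(U c) //; split => //.
      exists e; split=> //; split=> //; exists e'; split=> //; by rewrite mulrC.
    exists 1; split; last by rewrite mul1r.
    split; [exact: inO1| exists 1; split; [exact: inO1|by rewrite mulr1]].
  rewrite -cc' in E1 E2 H Cc' Ac' P2 *.
  have e1 : e = 1.
    apply: (@mulIf _ c); first by apply/eqP.
    by rewrite mul1r -E1.
  rewrite e1 mul1r in E2; rewrite E2 in P2 *.
  have [hAs1 hAs2] := hAs c Cc.
  have [z2 [_ U2]] := hAs2 a' ha'.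
  have aa : a = a'.
    rewrite -(U2 a') ?(U2 a) //; split => //.
      exists (a * (b' - b) - (a' - a) * b); split.
        by apply: inOB; apply: inOM => //; apply: inOB.
      by apply: (lc2 (K1 := - a') (K2 := a) P1 P2); ring.
    by exists 0; split; [exact: inO0| rewrite subrr mulr0].
  rewrite -aa in P2 *.
  have bb : b = b'.
    apply: (@mulIf _ c); first by apply/eqP.
    apply: (lc2 (K1 := -1) (K2 := 1) P1 P2); ring.
  by rewrite bb.
- exfalso; apply: (Cs_nz hCs Cc); by rewrite F1 ec' mulr0.
- exfalso; apply: (Cs_nz hCs Cc'); by rewrite E1 ec mulr0.
- by rewrite ea eb ec ed ea' eb' ec' ed'.
Qed.

Lemma M3_congr a b c d e f g h k a' b' c' d' e' f' g' h' k' :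
  a = a' -> b = b' -> c = c' -> d = d' -> e = e' -> f = f' -> g = g' -> h = h' -> k = k' ->
  M3 a b c d e f g h k = M3 a' b' c' d' e' f' g' h' k'.
Proof. by move=> -> -> -> -> -> -> -> -> ->. Qed.

Definition oM (M : 'M[algC]_3) := forall i j, inO (M i j).

Lemma oM_M3 a b c d e f g h k : inO a -> inO b -> inO c -> inO d -> inO e -> inO f ->
  inO g -> inO h -> inO k -> oM (M3 a b c d e f g h k).
Proof.
move=> ha hb hc hd he hf hg hh hk i j; rewrite mxE.
by case: i => [[|[|[|i]]] Hi] //; case: j => [[|[|[|j]]] Hj].
Qed.

Lemma oM_mul A B : oM A -> oM B -> oM (A *m B).
Proof.
move=> hA hB i j; rewrite mxE.
elim/big_ind: _ => //; [exact: inO0 | move=> x y; exact: inOD | move=> k _; exact: inOM].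
Qed.

Lemma dvd3_inO x : dvdO 3%:R x -> inO x.
Proof. by move=> [q [hq ->]]; apply: inOM => //; apply: inO_nat. Qed.

Lemma R3_inO x : R3 x -> inO x.
Proof. by move=> [a [b [_ [_ ->]]]]; apply: inOD; [apply: inO_nat|apply: inOM; [apply: inO_nat|apply: inO_omega]]. Qed.

Lemma Gam_M3 G : Gamma_inf3 G -> exists g1 g2 g3,
  [/\ dvdO 3%:R g1, dvdO 3%:R g2 & dvdO 3%:R g3] /\ G = M3 1 g1 g2 0 1 g3 0 0 1.
Proof.
move=> [h1 [h2 h3]]; exists (G i0 i1), (G i0 i2), (G i1 i2); split.
  by split; apply: h3.
by rewrite [LHS]eta3 !h2 !(h1 i1 i0) ?(h1 i2 i0) ?(h1 i2 i1).
Qed.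

Lemma Gam_of g1 g2 g3 : dvdO 3%:R g1 -> dvdO 3%:R g2 -> dvdO 3%:R g3 ->
  Gamma_inf3 (M3 1 g1 g2 0 1 g3 0 0 1).
Proof.
move=> d1 d2 d3; split; [|split] => [i j|i|i j]; rewrite mxE;
  case: i => [[|[|[|i]]] Hi] //; try case: j => [[|[|[|j]]] Hj] //.
Qed.

Lemma U3_M3 U : U3 U -> exists u1 u2 u3,
  [/\ R3 u1, R3 u2 & R3 u3] /\ U = M3 1 u1 u2 0 1 u3 0 0 1.
Proof.
move=> [h1 [h2 h3]]; exists (U i0 i1), (U i0 i2), (U i1 i2); split.
  by split; apply: h3.
by rewrite [LHS]eta3 !h2 !(h1 i1 i0) ?(h1 i2 i0) ?(h1 i2 i1).
Qed.

Lemma U3_of u1 u2 u3 : R3 u1 -> R3 u2 -> R3 u3 -> U3 (M3 1 u1 u2 0 1 u3 0 0 1).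
Proof.
move=> d1 d2 d3; split; [|split] => [i j|i|i j]; rewrite mxE;
  case: i => [[|[|[|i]]] Hi] //; try case: j => [[|[|[|j]]] Hj] //.
Qed.

Lemma D3_M3 D : D3 D -> exists x y z,
  [/\ inO x, inO y, inO z & x * y * z = 1] /\ D = M3 x 0 0 0 y 0 0 0 z.
Proof.
move=> [h1 [h2 h3]]; exists (D i0 i0), (D i1 i1), (D i2 i2); split.
  by split => //; apply: h2.
by rewrite [LHS]eta3 (h1 i0 i1) // (h1 i0 i2) // (h1 i1 i0) // (h1 i1 i2) // (h1 i2 i0) // (h1 i2 i1).
Qed.

Lemma D3_of x y z : inO x -> inO y -> inO z -> x * y * z = 1 -> D3 (M3 x 0 0 0 y 0 0 0 z).
Proof.
move=> hx hy hz hd; split; [|split] => [i j|i|]; rewrite ?mxE //=;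
  case: i => [[|[|[|i]]] Hi] //; try case: j => [[|[|[|j]]] Hj] //.
Qed.

Definition adj2 (y : 'M[algC]_2) := M2 (y j1 j1) (- y j0 j1) (- y j1 j0) (y j0 j0).

Lemma adj2_M2 a b c d : adj2 (M2 a b c d) = M2 d (- b) (- c) a.
Proof. by rewrite /adj2 !mxE. Qed.

Lemma phi1M y z : phi1 (y *m z) = phi1 y *m phi1 z.
Proof.
rewrite [y]eta2 [z]eta2 mul_M2 !phi1_M2 mul_M3; apply: M3_congr; ring.
Qed.
Lemma phi2M y z : phi2 (y *m z) = phi2 y *m phi2 z.
Proof.
rewrite [y]eta2 [z]eta2 mul_M2 !phi2_M2 mul_M3; apply: M3_congr; ring.
Qed.
Lemma phi1_1 : phi1 1%:M = 1%:M.
Proof. by rewrite M2_1 phi1_M2 M3_1. Qed.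
Lemma phi2_1 : phi2 1%:M = 1%:M.
Proof. by rewrite M2_1 phi2_M2 M3_1. Qed.

Lemma adj2K y : \det y = 1 -> y *m adj2 y = 1%:M /\ adj2 y *m y = 1%:M.
Proof.
rewrite [y]eta2 det_M2 adj2_M2 !mul_M2 M2_1 => h.
split; congr M2; try ring; by rewrite -h; ring.
Qed.

Lemma YoE Cs As y : Yo Cs As y -> exists a b c d, y = M2 a b c d /\
  [/\ [/\ inO a, inO b, inO c & inO d], a * d - b * c = 1 &
     ((Cs c /\ As c a) \/ [/\ a = 1, b = 0, c = 0 & d = 1])].
Proof. by rewrite [y]eta2 => /Yo_M2 H; do 4 eexists; split; [reflexivity|exact H]. Qed.

Lemma phi_facts Cs As y : Yo Cs As y ->
  [/\ oM (phi1 y), \det (phi1 y) = 1, oM (phi2 y) & \det (phi2 y) = 1].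
Proof.
move=> /YoE [a [b [c [d [-> [[ha hb hc hd] hdet _]]]]]].
rewrite phi1_M2 phi2_M2 !det_M3; split.
- by apply: oM_M3 => //; rewrite ?inO0 ?inO1; try exact: inO0; try exact: inO1.
- by apply: (lc1 (K := 1) hdet); ring.
- by apply: oM_M3 => //; try exact: inO0; try exact: inO1.
- by apply: (lc1 (K := 1) hdet); ring.
Qed.

Lemma U_facts u : U3 u -> oM u /\ \det u = 1.
Proof.
move=> /U3_M3 [u1 [u2 [u3 [[h1 h2 h3] ->]]]]; split.
  by apply: oM_M3; (try exact: inO0); (try exact: inO1); exact: R3_inO.
by rewrite det_M3; ring.
Qed.

Lemma D_facts d : D3 d -> oM d /\ \det d = 1.
Proof.
move=> /D3_M3 [x [y [z [[h1 h2 h3 h4] ->]]]]; split.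
  by apply: oM_M3; (try exact: inO0); (try exact: inO1); assumption.
by rewrite det_M3; apply: (lc1 (K := 1) h4); ring.
Qed.

Lemma G_facts g : Gamma_inf3 g -> oM g /\ \det g = 1.
Proof.
move=> /Gam_M3 [u1 [u2 [u3 [[h1 h2 h3] ->]]]]; split.
  by apply: oM_M3; (try exact: inO0); (try exact: inO1); exact: dvd3_inO.
by rewrite det_M3; ring.
Qed.

Lemma part1 Cs As p g : valid_piece Cs As p -> in_piece p g -> SL3o g.
Proof.
case: p => [u d y|u d y2 y1|u d y3 y2 y1] /=.
- move=> [/U_facts [ou du] [/D_facts [od dd] /(phi_facts) [o1 d1 _ _]]] [gam [/G_facts [og dg] ->]].
  split; first by repeat apply: oM_mul.
  by rewrite !det_mulmx du dd d1 dg !mul1r.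
- move=> [/U_facts [ou du] [/D_facts [od dd] [/phi_facts [_ _ o2 d2] [/phi_facts [o1 d1 _ _] _]]]].
  move=> [gam [/G_facts [og dg] ->]].
  split; first by repeat apply: oM_mul.
  by rewrite !det_mulmx du dd d1 d2 dg !mul1r.
- move=> [/U_facts [ou du] [/D_facts [od dd] [/phi_facts [o3 d3 _ _] [/phi_facts [_ _ o2 d2] [/phi_facts [o1 d1 _ _] _]]]]].
  move=> [gam [/G_facts [og dg] ->]].
  split; first by repeat apply: oM_mul.
  by rewrite !det_mulmx du dd d1 d2 d3 dg !mul1r.
Qed.

Lemma decompB B : oM B -> B i1 i0 = 0 -> B i2 i0 = 0 -> B i2 i1 = 0 -> \det B = 1 ->
  exists gam u d, [/\ Gamma_inf3 gam, U3 u, D3 d & B = gam *m u *m d].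
Proof.
move=> oB h10 h20 h21; rewrite [B]eta3 h10 h20 h21.
have := oB i0 i0; have := oB i0 i1; have := oB i0 i2; have := oB i1 i1; have := oB i1 i2; have := oB i2 i2.
move: (B i0 i0) (B i0 i1) (B i0 i2) (B i1 i1) (B i1 i2) (B i2 i2) => p q r s t v hv ht hs hr hq hp.
rewrite det_M3 => hdet.
have hd : p * s * v = 1 by rewrite -hdet; ring.
have [u1 [k1 [R1 hk1 E1]]] := red3 (inOM (inOM hq hp) hv : inO (q * p * v)).
have [u3 [k3 [R3' hk3 E3]]] := red3 (inOM (inOM ht hp) hs : inO (t * p * s)).
have [u2 [k2 [R2 hk2 E2]]] := red3 (inOM (inOM hr hp) hs : inO (r * p * s)).
have h3 : inO (3%:R : algC) := inO_nat 3.
exists (M3 1 (3%:R * k1) (3%:R * k2 - 3%:R * k1 * u3) 0 1 (3%:R * k3) 0 0 1),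
  (M3 1 u1 u2 0 1 u3 0 0 1), (M3 p 0 0 0 s 0 0 0 v); split.
- apply: Gam_of.
  + by exists k1.
  + exists (k2 - k1 * u3); split; last by ring.
    by apply: inOB => //; apply: inOM => //; apply: R3_inO.
  + by exists k3.
- exact: U3_of.
- exact: D3_of.
- rewrite !mul_M3.
  have -> : u1 = q * p * v - 3%:R * k1 by rewrite E1; ring.
  have -> : u2 = r * p * s - 3%:R * k2 by rewrite E2; ring.
  have -> : u3 = t * p * s - 3%:R * k3 by rewrite E3; ring.
  apply: M3_congr; try ring.
  + by apply: (lc1 (K := - q) hd); ring.
  + by apply: (lc1 (K := - r) hd); ring.
  + by apply: (lc1 (K := - t) hd); ring.
Qed.

Lemma step2 Cs As (hCs : reps_nonzero_mod_units Cs) (hAs : forall c, Cs c -> reps_mod c (As c)) h :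
  oM h -> \det h = 1 -> h i2 i0 = 0 -> h i2 i1 = 0 ->
  exists y gam u d, [/\ Yo Cs As y, Gamma_inf3 gam, U3 u, D3 d & h = gam *m u *m d *m phi1 y].
Proof.
move=> oh dh h20 h21.
have dh' : h i2 i2 * h i0 i0 * h i1 i1 - h i2 i2 * h i0 i1 * h i1 i0 = 1.
  by move: dh; rewrite {1}(eta3 h) det_M3 h20 h21 => <-; ring.
have [a [b [c [d [e [e' [Y [ha hb hc hd] hdet ee [E1 E2]]]]]]]] :=
  mkY hCs hAs (oh i1 i0) (oh i1 i1) (inOM (oh i2 i2) (oh i0 i0)) (inOM (oh i2 i2) (oh i0 i1)) dh'.
set B := h *m phi1 (adj2 (M2 a b c d)).
have oX : oM (phi1 (adj2 (M2 a b c d))).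
  by rewrite adj2_M2 phi1_M2; apply: oM_M3; (try exact: inO0); (try exact: inO1); (try exact: inON).
have [gam [u [dd [G U D EB]]]] : exists gam u d, [/\ Gamma_inf3 gam, U3 u, D3 d & B = gam *m u *m d].
  apply: decompB.
  - exact: oM_mul.
  - by rewrite /B adj2_M2 phi1_M2 [h]eta3 mul_M3 !mxE /= E1 E2; ring.
  - by rewrite /B adj2_M2 phi1_M2 [h]eta3 mul_M3 !mxE /= h20 h21; ring.
  - by rewrite /B adj2_M2 phi1_M2 [h]eta3 mul_M3 !mxE /= h20 h21; ring.
  - by rewrite /B det_mulmx dh adj2_M2 phi1_M2 det_M3 mul1r; apply: (lc1 (K := 1) hdet); ring.
exists (M2 a b c d), gam, u, dd; split => //.
rewrite -EB /B -mulmxA -phi1M (adj2K _).2 ?phi1_1 ?mulmx1 //.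
by rewrite det_M2.
Qed.

Lemma part2 Cs As (hCs : reps_nonzero_mod_units Cs) (hAs : forall c, Cs c -> reps_mod c (As c)) g :
  SL3o g -> exists p, valid_piece Cs As p /\ in_piece p g.
Proof.
move=> [og dg].
have [l [c0 [d0 [p [q [[hl hc0 hd0 hp hq] [e20 e21 hb]]]]]]] := bez (og i2 i0) (og i2 i1).
have [a1 [b1 [c1 [d1 [e1 [e1' [Y1 [ha1 hb1 hc1 hd1] det1 [he1 he1' ee1] [E1 E2]]]]]]]] :=
  mkY hCs hAs hc0 hd0 hp hq hb.
set mu := l * e1.
have g20 : g i2 i0 = mu * c1 by rewrite e20 E1 mulrA.
have g21 : g i2 i1 = mu * d1 by rewrite e21 E2 mulrA.
have hmu : inO mu := inOM hl he1.
case: (eqVneq mu 0) => [m0|mn].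
  have [y [gam [u [d [Y G U D E]]]]] := step2 hCs hAs og dg
    ltac:(by rewrite g20 m0 mul0r) ltac:(by rewrite g21 m0 mul0r).
  exists (P1 u d y); split => //; exists gam; split => //.
  by rewrite E /= !mulmxA.
have D : g i2 i0 * (g i0 i1 * g i1 i2 - g i0 i2 * g i1 i1)
        + g i2 i1 * (g i0 i2 * g i1 i0 - g i0 i0 * g i1 i2)
        + g i2 i2 * (g i0 i0 * g i1 i1 - g i0 i1 * g i1 i0) = 1.
  by move: dg; rewrite {1}(eta3 g) det_M3 => <-; ring.
rewrite g20 g21 in D.
set C20 := (g i0 i1 * g i1 i2 - g i0 i2 * g i1 i1) in D.
set C21 := (g i0 i2 * g i1 i0 - g i0 i0 * g i1 i2) in D.
set C22 := (g i0 i0 * g i1 i1 - g i0 i1 * g i1 i0) in D.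
have hC20 : inO C20 by apply: inOB; apply: inOM.
have hC21 : inO C21 by apply: inOB; apply: inOM.
have hC22 : inO C22 by apply: inOB; apply: inOM.
have hb2 : C22 * g i2 i2 - (- (c1 * C20 + d1 * C21)) * mu = 1.
  by apply: (lc1 (K := 1) D); ring.
have [a2 [b2 [c2 [d2 [e2 [e2' [Y2 [ha2 hb2' hc2 hd2] det2 [he2 he2' ee2] [F1 F2]]]]]]]] :=
  mkY hCs hAs hmu (og i2 i2) hC22 (inON (inOD (inOM hc1 hC20) (inOM hd1 hC21))) hb2.
set X := phi1 (adj2 (M2 a1 b1 c1 d1)) *m phi2 (adj2 (M2 a2 b2 c2 d2)).
set W := phi2 (M2 a2 b2 c2 d2) *m phi1 (M2 a1 b1 c1 d1).
have XW : X *m W = 1%:M.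
  rewrite /X /W mulmxA -[_ *m phi2 _ *m phi2 _]mulmxA -phi2M (adj2K _).2 ?det_M2 //.
  by rewrite phi2_1 mulmx1 -phi1M (adj2K _).2 ?det_M2 // phi1_1.
have oXm : oM X.
  rewrite /X !adj2_M2 phi1_M2 phi2_M2 mul_M3; apply: oM_M3;
  repeat first [exact: inO0 | exact: inO1 | apply: inOD | apply: inOM | apply: inON | assumption].
have dX : \det X = 1.
  rewrite /X det_mulmx !adj2_M2 phi1_M2 phi2_M2 !det_M3.
  transitivity ((a1 * d1 - b1 * c1) * (a2 * d2 - b2 * c2)); first by ring.
  by rewrite det1 det2 mulr1.
set h := g *m X.
have gE : g = h *m W by rewrite /h -mulmxA XW mulmx1.
have Xe : X = M3 d1 (- b1 * d2) (b1 * b2) (- c1) (a1 * d2) (- (a1 * b2)) 0 (- c2) a2.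
  by rewrite /X !adj2_M2 phi1_M2 phi2_M2 mul_M3; apply: M3_congr; ring.
have h20 : h i2 i0 = 0.
  by rewrite /h Xe {1}(eta3 g) mul_M3 !mxE /= g20 g21; ring.
have h21 : h i2 i1 = 0.
  rewrite /h Xe {1}(eta3 g) mul_M3 !mxE /= g20 g21 F2 F1.
  by apply: (lc1 (K := e2 * c2 * d2) det1); ring.
have [y [gam [u [d [Y G U D' E]]]]] := step2 hCs hAs (oM_mul og oXm)
    ltac:(by rewrite det_mulmx dg dX mul1r) h20 h21.
have y2n : M2 a2 b2 c2 d2 != 1%:M.
  apply/negP => /eqP; rewrite M2_1 => /M2_inj [_ _ c20 _].
  by move: mn; rewrite F1 c20 mulr0 eqxx.
case: (eqVneq y 1%:M) => [y1|yn].
  exists (P2 u d (M2 a2 b2 c2 d2) (M2 a1 b1 c1 d1)); split.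
    by split=> //; split=> //; split=> //; split=> //; apply/eqP.
  exists gam; split => //.
  by rewrite gE /h E y1 phi1_1 mulmx1 /= !mulmxA.
exists (P3 u d y (M2 a2 b2 c2 d2) (M2 a1 b1 c1 d1)); split.
  by split=> //; split=> //; split=> //; split=> //; split=> //; split; apply/eqP.
exists gam; split => //.
by rewrite gE /h E /= /W !mulmxA.
Qed.

Lemma lc3 (x y K1 P1 Q1 K2 P2 Q2 K3 P3 Q3 : algC) : P1 = Q1 -> P2 = Q2 -> P3 = Q3 ->
  x - y = K1 * (P1 - Q1) + K2 * (P2 - Q2) + K3 * (P3 - Q3) -> x = y.
Proof. by move=> -> -> ->; rewrite !subrr !mulr0 !addr0 => /eqP; rewrite subr_eq0 => /eqP. Qed.

Lemma wP2E a2 b2 c2 d2 a1 b1 c1 d1 :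
  phi2 (M2 a2 b2 c2 d2) *m phi1 (M2 a1 b1 c1 d1) =
  M3 a1 b1 0 (a2 * c1) (a2 * d1) b2 (c2 * c1) (c2 * d1) d2.
Proof. by rewrite phi2_M2 phi1_M2 mul_M3; apply: M3_congr; ring. Qed.

Lemma wP3E a3 b3 c3 d3 a2 b2 c2 d2 a1 b1 c1 d1 :
  phi1 (M2 a3 b3 c3 d3) *m phi2 (M2 a2 b2 c2 d2) *m phi1 (M2 a1 b1 c1 d1) =
  M3 (a3 * a1 + b3 * a2 * c1) (a3 * b1 + b3 * a2 * d1) (b3 * b2)
     (c3 * a1 + d3 * a2 * c1) (c3 * b1 + d3 * a2 * d1) (d3 * b2)
     (c2 * c1) (c2 * d1) d2.
Proof. by rewrite phi2_M2 !phi1_M2 !mul_M3; apply: M3_congr; ring. Qed.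

Lemma KP1P1 Cs As (hCs : reps_nonzero_mod_units Cs) (hAs : forall c, Cs c -> reps_mod c (As c))
  a b c d a' b' c' d' b00 b01 b02 b11 b12 b22 :
  Yo Cs As (M2 a b c d) -> Yo Cs As (M2 a' b' c' d') ->
  M3 a' b' 0 c' d' 0 0 0 1 = M3 b00 b01 b02 0 b11 b12 0 0 b22 *m M3 a b 0 c d 0 0 0 1 ->
  M2 a b c d = M2 a' b' c' d'.
Proof.
move=> Y Y'; rewrite mul_M3 => /M3_inj [_ _ _ e10 [e11 _ _ _ _]].
apply: (Yuniq hCs hAs Y Y'); rewrite e10 e11; ring.
Qed.

Lemma KP1X Cs (hCs : reps_nonzero_mod_units Cs) a1 b1 c1 d1 c2 d2 x00 x01 x02 x10 x11 x12
  w00 w01 w02 w10 w11 w12 b00 b01 b02 b11 b12 b22 :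
  a1 * d1 - b1 * c1 = 1 -> Cs c2 ->
  M3 x00 x01 x02 x10 x11 x12 (c2 * c1) (c2 * d1) d2 =
    M3 b00 b01 b02 0 b11 b12 0 0 b22 *m M3 w00 w01 w02 w10 w11 w12 0 0 1 -> False.
Proof.
move=> det1 Cc; rewrite mul_M3 => /M3_inj [_ _ _ _ [_ _ e20 e21 _]].
have E1 : c2 * c1 = 0 by rewrite e20; ring.
have E2 : c2 * d1 = 0 by rewrite e21; ring.
apply: (Cs_nz hCs Cc).
by apply: (lc3 (K1 := - b1) (K2 := a1) (K3 := - c2) E1 E2 det1); ring.
Qed.

Lemma Krow3 Cs As (hCs : reps_nonzero_mod_units Cs) (hAs : forall c, Cs c -> reps_mod c (As c))
  a1 b1 c1 d1 a2 b2 c2 d2 a1' b1' c1' d1' a2' b2' c2' d2' x00 x01 x02 x10 x11 x12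
  w00 w01 w02 w10 w11 w12 b00 b01 b02 b11 b12 b22 :
  Yo Cs As (M2 a1 b1 c1 d1) -> Yo Cs As (M2 a2 b2 c2 d2) -> Cs c2 ->
  Yo Cs As (M2 a1' b1' c1' d1') -> Yo Cs As (M2 a2' b2' c2' d2') -> Cs c2' ->
  M3 x00 x01 x02 x10 x11 x12 (c2' * c1') (c2' * d1') d2' =
    M3 b00 b01 b02 0 b11 b12 0 0 b22 *m M3 w00 w01 w02 w10 w11 w12 (c2 * c1) (c2 * d1) d2 ->
  M2 a1 b1 c1 d1 = M2 a1' b1' c1' d1' /\ M2 a2 b2 c2 d2 = M2 a2' b2' c2' d2'.
Proof.
move=> Y1 Y2 C2 Y1' Y2' C2'; rewrite mul_M3 => /M3_inj [_ _ _ _ [_ _ e20 e21 e22]].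
have E1 : c2' * c1' = b22 * (c2 * c1) by rewrite e20; ring.
have E2 : c2' * d1' = b22 * (c2 * d1) by rewrite e21; ring.
have E3 : d2' = b22 * d2 by rewrite e22; ring.
have [_ det1 _] := Yo_M2 Y1.
have H1 : c1' * d1 = d1' * c1.
  apply: (@mulfI _ c2'); first by apply/eqP; apply: (Cs_nz hCs C2').
  by rewrite !mulrA E1 E2; ring.
have Y1e := Yuniq hCs hAs Y1 Y1' H1.
split => //.
have [ea eb ec ed] := M2_inj Y1e; rewrite ea eb ec ed in det1 E1 E2.
have E4 : c2' = b22 * c2.
  by apply: (lc3 (K1 := - b1') (K2 := a1') (K3 := - (c2' - b22 * c2)) E1 E2 det1); ring.
apply: (Yuniq hCs hAs Y2 Y2'); rewrite E4 E3; ring.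
Qed.

Lemma K23 Cs (hCs : reps_nonzero_mod_units Cs) a1 b1 c1 d1 a2 b2 c2 d2 a3 b3 c3 d3
  b00 b01 b02 b11 b12 b22 :
  a1 * d1 - b1 * c1 = 1 -> Cs c3 ->
  M3 (a3 * a1 + b3 * a2 * c1) (a3 * b1 + b3 * a2 * d1) (b3 * b2)
     (c3 * a1 + d3 * a2 * c1) (c3 * b1 + d3 * a2 * d1) (d3 * b2)
     (c2 * c1) (c2 * d1) d2 =
  M3 b00 b01 b02 0 b11 b12 0 0 b22 *m
  M3 a1 b1 0 (a2 * c1) (a2 * d1) b2 (c2 * c1) (c2 * d1) d2 -> False.
Proof.
move=> det1 C3; rewrite mul_M3 => /M3_inj [_ _ _ e10 [e11 _ _ _ _]].
have E1 : c3 * a1 + d3 * a2 * c1 = b11 * (a2 * c1) + b12 * (c2 * c1) by rewrite e10; ring.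
have E2 : c3 * b1 + d3 * a2 * d1 = b11 * (a2 * d1) + b12 * (c2 * d1) by rewrite e11; ring.
apply: (Cs_nz hCs C3).
by apply: (lc3 (K1 := d1) (K2 := - c1) (K3 := - c3) E1 E2 det1); ring.
Qed.

Lemma K33 Cs As (hCs : reps_nonzero_mod_units Cs) (hAs : forall c, Cs c -> reps_mod c (As c))
  a1 b1 c1 d1 a2 b2 c2 d2 a3 b3 c3 d3 a3' b3' c3' d3' b00 b01 b02 b11 b12 b22 :
  a1 * d1 - b1 * c1 = 1 -> a2 * d2 - b2 * c2 = 1 ->
  Yo Cs As (M2 a3 b3 c3 d3) -> Yo Cs As (M2 a3' b3' c3' d3') ->
  M3 (a3' * a1 + b3' * a2 * c1) (a3' * b1 + b3' * a2 * d1) (b3' * b2)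
     (c3' * a1 + d3' * a2 * c1) (c3' * b1 + d3' * a2 * d1) (d3' * b2)
     (c2 * c1) (c2 * d1) d2 =
  M3 b00 b01 b02 0 b11 b12 0 0 b22 *m
  M3 (a3 * a1 + b3 * a2 * c1) (a3 * b1 + b3 * a2 * d1) (b3 * b2)
     (c3 * a1 + d3 * a2 * c1) (c3 * b1 + d3 * a2 * d1) (d3 * b2)
     (c2 * c1) (c2 * d1) d2 ->
  M2 a3 b3 c3 d3 = M2 a3' b3' c3' d3'.
Proof.
move=> det1 det2 Y3 Y3'; rewrite mul_M3 => /M3_inj [_ _ _ e10 [e11 e12 _ _ _]].
have E1 : c3' * a1 + d3' * a2 * c1 = b11 * (c3 * a1 + d3 * a2 * c1) + b12 * (c2 * c1)
  by rewrite e10; ring.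
have E2 : c3' * b1 + d3' * a2 * d1 = b11 * (c3 * b1 + d3 * a2 * d1) + b12 * (c2 * d1)
  by rewrite e11; ring.
have E3 : d3' * b2 = b11 * (d3 * b2) + b12 * d2 by rewrite e12; ring.
have M : c3' = b11 * c3.
  by apply: (lc3 (K1 := d1) (K2 := - c1) (K3 := - (c3' - b11 * c3)) E1 E2 det1); ring.
have T : d3' * a2 - b11 * d3 * a2 - b12 * c2 = 0.
  by apply: (lc3 (K1 := - b1) (K2 := a1) (K3 := - (d3' * a2 - b11 * d3 * a2 - b12 * c2)) E1 E2 det1); ring.
have N : d3' = b11 * d3.
  by apply: (lc3 (K1 := d2) (K2 := - c2) (K3 := - (d3' - b11 * d3)) T E3 det2); ring.
apply: (Yuniq hCs hAs Y3 Y3'); rewrite M N; ring.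
Qed.

Definition pu (p : piece) := match p with P1 u _ _ | P2 u _ _ _ | P3 u _ _ _ _ => u end.
Definition pd (p : piece) := match p with P1 _ d _ | P2 _ d _ _ | P3 _ d _ _ _ => d end.
Definition pw (p : piece) := match p with
  | P1 _ _ y => phi1 y
  | P2 _ _ y2 y1 => phi2 y2 *m phi1 y1
  | P3 _ _ y3 y2 y1 => phi1 y3 *m phi2 y2 *m phi1 y1 end.
Definition pys (p : piece) := match p with
  | P1 _ _ y => [:: y] | P2 _ _ y2 y1 => [:: y2; y1] | P3 _ _ y3 y2 y1 => [:: y3; y2; y1] end.

Lemma piece_mxE p : piece_mx p = pu p *m pd p *m pw p.
Proof. by case: p. Qed.

Lemma piece_ext p q : pu p = pu q -> pd p = pd q -> pys p = pys q -> p = q.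
Proof.
by case: p => [u d y|u d y2 y1|u d y3 y2 y1]; case: q => [u' d' y'|u' d' y2' y1'|u' d' y3' y2' y1'] //=;
  move=> -> -> [] *; subst.
Qed.

Lemma pw_pys p q : pys p = pys q -> pw p = pw q.
Proof.
by case: p => [u d y|u d y2 y1|u d y3 y2 y1]; case: q => [u' d' y'|u' d' y2' y1'|u' d' y3' y2' y1'] //=;
  move=> [] *; subst.
Qed.

Lemma valid_ud Cs As p : valid_piece Cs As p -> U3 (pu p) /\ D3 (pd p).
Proof. by case: p => [u d y|u d y2 y1|u d y3 y2 y1] /= [hu [hd _]]. Qed.

Lemma valid_detw Cs As p : valid_piece Cs As p -> \det (pw p) = 1.
Proof.
case: p => [u d y|u d y2 y1|u d y3 y2 y1] /=.
- by move=> [_ [_ /phi_facts [_ -> _ _]]].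
- by move=> [_ [_ [/phi_facts [_ _ _ d2] [/phi_facts [_ d1 _ _] _]]]]; rewrite det_mulmx d1 d2 mulr1.
- move=> [_ [_ [/phi_facts [_ d3 _ _] [/phi_facts [_ _ _ d2] [/phi_facts [_ d1 _ _] _]]]]].
  by rewrite !det_mulmx d1 d2 d3 !mulr1.
Qed.

Definition upT (M : 'M[algC]_3) := [/\ M i1 i0 = 0, M i2 i0 = 0 & M i2 i1 = 0].

Lemma upT_M3E M : upT M ->
  M = M3 (M i0 i0) (M i0 i1) (M i0 i2) 0 (M i1 i1) (M i1 i2) 0 0 (M i2 i2).
Proof. by move=> [h1 h2 h3]; rewrite {1}(eta3 M) h1 h2 h3. Qed.

Lemma upT_M3 a b c e f k : upT (M3 a b c 0 e f 0 0 k).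
Proof. by split; rewrite mxE. Qed.

Lemma upT_mul A B : upT A -> upT B -> upT (A *m B).
Proof.
move=> /upT_M3E -> /upT_M3E ->; rewrite mul_M3; split; rewrite mxE /=; ring.
Qed.

Definition adjU (M : 'M[algC]_3) :=
  M3 (M i1 i1 * M i2 i2) (- M i0 i1 * M i2 i2) (M i0 i1 * M i1 i2 - M i0 i2 * M i1 i1)
     0 (M i0 i0 * M i2 i2) (- M i0 i0 * M i1 i2) 0 0 (M i0 i0 * M i1 i1).

Lemma adjUK M : upT M -> \det M = 1 -> adjU M *m M = 1%:M.
Proof.
move=> hM hd.
have hd' : M i0 i0 * M i1 i1 * M i2 i2 = 1.
  by move: hd; rewrite {1}(upT_M3E hM) det_M3 => <-; ring.
rewrite /adjU [X in _ *m X](upT_M3E hM) mul_M3 M3_1; apply: M3_congr; try ring;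
  by apply: (lc1 (K := 1) hd'); ring.
Qed.

Lemma B_facts gam u d : Gamma_inf3 gam -> U3 u -> D3 d ->
  upT (gam *m u *m d) /\ \det (gam *m u *m d) = 1.
Proof.
move=> /Gam_M3 [g1 [g2 [g3 [_ ->]]]] /U3_M3 [u1 [u2 [u3 [_ ->]]]] /D3_M3 [x [y [z [[_ _ _ h] ->]]]].
split; first by apply: upT_mul; [apply: upT_mul|]; apply: upT_M3.
rewrite !det_mulmx !det_M3; apply: (lc1 (K := 1) h); ring.
Qed.

Lemma Buniq gam u d gam' u' d' : Gamma_inf3 gam -> U3 u -> D3 d ->
  Gamma_inf3 gam' -> U3 u' -> D3 d' ->
  gam *m u *m d = gam' *m u' *m d' -> u = u' /\ d = d'.
Proof.
move=> /Gam_M3 [g1 [g2 [g3 [[[q1 [hq1 eq1]] [q2 [hq2 eq2]] [q3 [hq3 eq3]]] ->]]]].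
move=> /U3_M3 [u1 [u2 [u3 [[R1 R2 R3'] ->]]]] /D3_M3 [x [y [z [[hx hy hz h] ->]]]].
move=> /Gam_M3 [g1' [g2' [g3' [[[q1' [hq1' eq1']] [q2' [hq2' eq2']] [q3' [hq3' eq3']]] ->]]]].
move=> /U3_M3 [u1' [u2' [u3' [[R1' R2' R3''] ->]]]] /D3_M3 [x' [y' [z' [[hx' hy' hz' h'] ->]]]].
rewrite !mul_M3 => /M3_inj [e00 e01 e02 _ [e11 e12 _ _ e22]].
have X : x = x' by apply: (lc1 (K := 1) e00); ring.
have Y : y = y' by apply: (lc1 (K := 1) e11); ring.
have Z : z = z' by apply: (lc1 (K := 1) e22); ring.
subst x' y' z'.
have yn : y != 0 by apply/eqP => y0; move: h; rewrite y0 mulr0 mul0r => /eqP; rewrite eq_sym oner_eq0.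
have zn : z != 0 by apply/eqP => z0; move: h; rewrite z0 mulr0 => /eqP; rewrite eq_sym oner_eq0.
have F1 : (u1 + g1) * y = (u1' + g1') * y by apply: (lc1 (K := 1) e01); ring.
have F3 : (u3 + g3) * z = (u3' + g3') * z by apply: (lc1 (K := 1) e12); ring.
have F2 : (u2 + g1 * u3 + g2) * z = (u2' + g1' * u3' + g2') * z by apply: (lc1 (K := 1) e02); ring.
have {}F1 := mulIf yn F1; have {}F2 := mulIf zn F2; have {}F3 := mulIf zn F3.
have U1 : u1 = u1'.
  apply: R3_uniq => //; exists (q1' - q1); split; first by apply: inOB.
  by apply: (lc1 (K := 1) F1); rewrite eq1 eq1'; ring.
have U3' : u3 = u3'.
  apply: R3_uniq => //; exists (q3' - q3); split; first by apply: inOB.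
  by apply: (lc1 (K := 1) F3); rewrite eq3 eq3'; ring.
subst u3'.
have U2 : u2 = u2'.
  apply: R3_uniq => //; exists ((q1' - q1) * u3 + q2' - q2); split.
    by apply: inOB => //; apply: inOD => //; apply: inOM; [apply: inOB|apply: R3_inO].
  by apply: (lc1 (K := 1) F2); rewrite eq1 eq1' eq2 eq2'; ring.
by rewrite U1 U2.
Qed.

Lemma YoC Cs As y : Yo Cs As y -> y != 1%:M -> exists a b c d, y = M2 a b c d /\
  [/\ [/\ inO a, inO b, inO c & inO d], a * d - b * c = 1 & (Cs c /\ As c a)].
Proof.
move=> /YoE [a [b [c [d [E [hin hdet [C|[ea eb ec ed]]]]]]]] yn.
  by exists a, b, c, d.
by move: yn; rewrite E ea eb ec ed -M2_1 eqxx.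
Qed.

Lemma wcompare Cs As (hCs : reps_nonzero_mod_units Cs) (hAs : forall c, Cs c -> reps_mod c (As c))
  p q Bt Bt' : valid_piece Cs As p -> valid_piece Cs As q -> upT Bt -> upT Bt' ->
  pw q = Bt *m pw p -> pw p = Bt' *m pw q -> pys p = pys q.
Proof.
move=> vp vq /upT_M3E -> /upT_M3E ->.
case: p vp => [u d y|u d y2 y1|u d y3 y2 y1] vp;
case: q vq => [u' d' y'|u' d' y2' y1'|u' d' y3' y2' y1'] vq /=.
- move: vp vq => [_ [_ Y]] [_ [_ Y']].
  have [a [b [c [d0 [E _]]]]] := YoE Y; subst y.
  have [a' [b' [c' [d0' [E _]]]]] := YoE Y'; subst y'.
  rewrite !phi1_M2 => e1 _.
  by rewrite (KP1P1 hCs hAs Y Y' e1).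
- move: vp vq => [_ [_ Y]] [_ [_ [Y2' [Y1' n2']]]].
  have [a [b [c [d0 [E _]]]]] := YoE Y; subst y.
  have [a2 [b2 [c2 [d2 [E [_ _ [C2 _]]]]]]] := YoC Y2' (introN eqP n2'); subst y2'.
  have [a1 [b1 [c1 [d1 [E [_ det1 _]]]]]] := YoE Y1'; subst y1'.
  rewrite wP2E phi1_M2 => e1 _.
  by case: (KP1X hCs det1 C2 e1).
- move: vp vq => [_ [_ Y]] [_ [_ [Y3' [Y2' [Y1' [n2' n3']]]]]].
  have [a [b [c [d0 [E _]]]]] := YoE Y; subst y.
  have [a2 [b2 [c2 [d2 [E [_ _ [C2 _]]]]]]] := YoC Y2' (introN eqP n2'); subst y2'.
  have [a1 [b1 [c1 [d1 [E [_ det1 _]]]]]] := YoE Y1'; subst y1'.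
  have [a3 [b3 [c3 [d3 [E _]]]]] := YoE Y3'; subst y3'.
  rewrite wP3E phi1_M2 => e1 _.
  by case: (KP1X hCs det1 C2 e1).
- move: vp vq => [_ [_ [Y2 [Y1 n2]]]] [_ [_ Y]].
  have [a [b [c [d0 [E _]]]]] := YoE Y; subst y'.
  have [a2 [b2 [c2 [d2 [E [_ _ [C2 _]]]]]]] := YoC Y2 (introN eqP n2); subst y2.
  have [a1 [b1 [c1 [d1 [E [_ det1 _]]]]]] := YoE Y1; subst y1.
  rewrite wP2E phi1_M2 => _ e2.
  by case: (KP1X hCs det1 C2 e2).
- move: vp vq => [_ [_ [Y2 [Y1 n2]]]] [_ [_ [Y2' [Y1' n2']]]].
  have [a2 [b2 [c2 [d2 [E [_ _ [C2 _]]]]]]] := YoC Y2 (introN eqP n2); subst y2.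
  have [a1 [b1 [c1 [d1 [E [_ det1 _]]]]]] := YoE Y1; subst y1.
  have [a2' [b2' [c2' [d2' [E [_ _ [C2' _]]]]]]] := YoC Y2' (introN eqP n2'); subst y2'.
  have [a1' [b1' [c1' [d1' [E [_ det1' _]]]]]] := YoE Y1'; subst y1'.
  rewrite !wP2E => e1 _.
  have [-> ->] := Krow3 hCs hAs Y1 Y2 C2 Y1' Y2' C2' e1.
  by [].
- move: vp vq => [_ [_ [Y2 [Y1 n2]]]] [_ [_ [Y3' [Y2' [Y1' [n2' n3']]]]]].
  have [a2 [b2 [c2 [d2 [E [_ _ [C2 _]]]]]]] := YoC Y2 (introN eqP n2); subst y2.
  have [a1 [b1 [c1 [d1 [E [_ det1 _]]]]]] := YoE Y1; subst y1.
  have [a2' [b2' [c2' [d2' [E [_ _ [C2' _]]]]]]] := YoC Y2' (introN eqP n2'); subst y2'.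
  have [a1' [b1' [c1' [d1' [E [_ det1' _]]]]]] := YoE Y1'; subst y1'.
  have [a3' [b3' [c3' [d3' [E [_ _ [C3' _]]]]]]] := YoC Y3' (introN eqP n3'); subst y3'.
  rewrite wP2E wP3E => e1 _.
  have [E1 E2] := Krow3 hCs hAs Y1 Y2 C2 Y1' Y2' C2' e1.
  have [? ? ? ?] := M2_inj E1; have [? ? ? ?] := M2_inj E2; subst.
  by case: (K23 hCs det1 C3' e1).
- move: vp vq => [_ [_ [Y3 [Y2 [Y1 [n2 n3]]]]]] [_ [_ Y]].
  have [a [b [c [d0 [E _]]]]] := YoE Y; subst y'.
  have [a2 [b2 [c2 [d2 [E [_ _ [C2 _]]]]]]] := YoC Y2 (introN eqP n2); subst y2.
  have [a1 [b1 [c1 [d1 [E [_ det1 _]]]]]] := YoE Y1; subst y1.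
  have [a3 [b3 [c3 [d3 [E _]]]]] := YoE Y3; subst y3.
  rewrite wP3E phi1_M2 => _ e2.
  by case: (KP1X hCs det1 C2 e2).
- move: vp vq => [_ [_ [Y3 [Y2 [Y1 [n2 n3]]]]]] [_ [_ [Y2' [Y1' n2']]]].
  have [a2 [b2 [c2 [d2 [E [_ _ [C2 _]]]]]]] := YoC Y2 (introN eqP n2); subst y2.
  have [a1 [b1 [c1 [d1 [E [_ det1 _]]]]]] := YoE Y1; subst y1.
  have [a3 [b3 [c3 [d3 [E [_ _ [C3 _]]]]]]] := YoC Y3 (introN eqP n3); subst y3.
  have [a2' [b2' [c2' [d2' [E [_ _ [C2' _]]]]]]] := YoC Y2' (introN eqP n2'); subst y2'.
  have [a1' [b1' [c1' [d1' [E [_ det1' _]]]]]] := YoE Y1'; subst y1'.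
  rewrite wP2E wP3E => _ e2.
  have [E1 E2] := Krow3 hCs hAs Y1' Y2' C2' Y1 Y2 C2 e2.
  have [? ? ? ?] := M2_inj E1; have [? ? ? ?] := M2_inj E2; subst.
  by case: (K23 hCs det1' C3 e2).
- move: vp vq => [_ [_ [Y3 [Y2 [Y1 [n2 n3]]]]]] [_ [_ [Y3' [Y2' [Y1' [n2' n3']]]]]].
  have [a2 [b2 [c2 [d2 [E [_ det2 [C2 _]]]]]]] := YoC Y2 (introN eqP n2); subst y2.
  have [a1 [b1 [c1 [d1 [E [_ det1 _]]]]]] := YoE Y1; subst y1.
  have [a3 [b3 [c3 [d3 [E _]]]]] := YoE Y3; subst y3.
  have [a2' [b2' [c2' [d2' [E [_ _ [C2' _]]]]]]] := YoC Y2' (introN eqP n2'); subst y2'.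
  have [a1' [b1' [c1' [d1' [E [_ det1' _]]]]]] := YoE Y1'; subst y1'.
  have [a3' [b3' [c3' [d3' [E _]]]]] := YoE Y3'; subst y3'.
  rewrite !wP3E => e1 _.
  have [E1 E2] := Krow3 hCs hAs Y1 Y2 C2 Y1' Y2' C2' e1.
  have [? ? ? ?] := M2_inj E1; have [? ? ? ?] := M2_inj E2; subst.
  by rewrite (K33 hCs hAs det1 det2 Y3 Y3' e1).
Qed.

Lemma part3 Cs As (hCs : reps_nonzero_mod_units Cs) (hAs : forall c, Cs c -> reps_mod c (As c))
  p q g : valid_piece Cs As p -> valid_piece Cs As q -> in_piece p g -> in_piece q g -> p = q.
Proof.
move=> vp vq [gam [G E]] [gam' [G' E']].
have [Up Dp] := valid_ud vp; have [Uq Dq] := valid_ud vq.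
set B := gam *m pu p *m pd p; set B' := gam' *m pu q *m pd q.
have [uB dB] := B_facts G Up Dp; have [uB' dB'] := B_facts G' Uq Dq.
have gB : g = B *m pw p by rewrite E piece_mxE /B !mulmxA.
have gB' : g = B' *m pw q by rewrite E' piece_mxE /B' !mulmxA.
have e1 : pw q = (adjU B' *m B) *m pw p.
  by rewrite -mulmxA -gB gB' mulmxA adjUK // mul1mx.
have e2 : pw p = (adjU B *m B') *m pw q.
  by rewrite -mulmxA -gB' gB mulmxA adjUK // mul1mx.
have hupA : forall M, upT (adjU M) by move=> M; apply: upT_M3.
have Py := wcompare hCs hAs vp vq (upT_mul (hupA _) uB) (upT_mul (hupA _) uB') e1 e2.
have Pw := pw_pys Py.
have BB : B = B'.
  have un : pw p \in unitmx by rewrite unitmxE (valid_detw vp) unitr1.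
  by rewrite -(mulmxK un B) -gB gB' -Pw mulmxK.
have [eu ed] := Buniq G Up Dp G' Uq Dq BB.
exact: piece_ext.
Qed.

Unset Implicit Arguments.

Theorem theorem3p1
  (Cs : algC -> Prop) (As : algC -> algC -> Prop)
  (hCs : reps_nonzero_mod_units Cs)
  (hAs : forall c, Cs c -> reps_mod c (As c)) :
  (* every piece lies in SL_3(o) *)
  (forall p g, valid_piece Cs As p -> in_piece p g -> SL3o g) /\
  (* the pieces cover SL_3(o) *)
  (forall g, SL3o g -> exists p, valid_piece Cs As p /\ in_piece p g) /\
  (* distinct pieces are disjoint *)
  (forall p q g, valid_piece Cs As p -> valid_piece Cs As q ->
     in_piece p g -> in_piece q g -> p = q).
Proof.
split; first by move=> p g; apply: part1.
split; first by move=> g; apply: part2.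
by move=> p q g; apply: part3.
Qed.
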